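(* Let $\ell,m$ be positive integers and $\mu\in\mathcal{P}^{\ell,\ell+m-1}$, and let $\mu'=\tau_{\ell+m-1}(\mu)$. Then the following are equivalent: (1) for every $i\in[\ell]$, if $\tilde\mu(i)<i$ then $\tilde\mu(\tilde\mu(i))<i$; (2) for every $i\in[\ell]$, if $\widetilde{\mu'}(i)>i$ then $\widetilde{\mu'}(\widetilde{\mu'}(i))>i$.
   Context: For a positive integer $n$, $[n]=\{1,\dots,n\}$. $\mathcal{P}^{n,k}$ is the set of partitions $(\mu_1\geq\dots\geq\mu_n>0)$ with exactly $n$ parts and $\mu_1\leq k$, regarded as weakly decreasing functions $[n]\to[k]$, $\mu(i)=\mu_i$. The map $\tau_k:\mathcal{P}^{n,k}\to\mathcal{P}^{n,k}$ is $\tau_k(\mu_1,\dots,\mu_n)=(k+1-\mu_n,\dots,k+1-\mu_1)$. Define $t:[\ell]\times[\ell+m-1]\to[\ell]$ by $t(r,s)=s$ if $s<r$, $t(r,s)=r$ if $r\leq s\leq m+r-1$, $t(r,s)=s-m+1$ if $s>m+r-1$; for $\nu\in\mathcal{P}^{\ell,\ell+m-1}$, $\tilde\nu:[\ell]\to[\ell]$ is $\tilde\nu(i)=t(i,\nu(i))$. *)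

(* Defs.v *)
From mathcomp Require Import all_boot.
Set Implicit Arguments. Unset Strict Implicit. Unset Printing Implicit Defensive.

(* A partition in P^{n,k}: a weakly decreasing function [n] -> [k],
   represented as mu : nat -> nat, with only the values on 1..n relevant. *)
Definition inP (n k : nat) (mu : nat -> nat) : Prop :=
  (forall i, 1 <= i <= n -> 1 <= mu i <= k) /\
  (forall i j, 1 <= i -> i <= j -> j <= n -> mu j <= mu i).

Definition tau (n k : nat) (mu : nat -> nat) : nat -> nat :=
  fun i => k.+1 - mu (n.+1 - i).

(* t : [l] x [l+m-1] -> [l] *)
Definition tfun (m r s : nat) : nat :=
  if s < r then s else if s <= m + r - 1 then r else s - m + 1.

Definition tilde (m : nat) (nu : nat -> nat) : nat -> nat :=
  fun i => tfun m i (nu i).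

(* Main.v *)
Require Import Defs.
From mathcomp Require Import all_boot.
From mathcomp Require Import zify.

Lemma tfun_range l m j s : 0 < m -> 1 <= j <= l -> 1 <= s <= l + m - 1 ->
  1 <= tfun m j s <= l.
Proof.
move=> hm hj hs; rewrite /tfun.
case: ifP => h1; [lia|]; case: ifP => h2; lia.
Qed.

Lemma tfun_dual l m i s : 0 < m -> 1 <= i <= l -> 1 <= s <= l + m - 1 ->
  tfun m i ((l + m - 1).+1 - s) = l.+1 - tfun m (l.+1 - i) s.
Proof.
move=> hm hi hs; rewrite /tfun.
case: ifP => h1; case: ifP => h2; try case: ifP => h3; try case: ifP => h4; lia.
Qed.

Theorem claim3p7 (l m : nat) (mu : nat -> nat) :
  0 < l -> 0 < m -> inP l (l + m - 1) mu ->
  (forall i, 1 <= i <= l ->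
     tilde m mu i < i -> tilde m mu (tilde m mu i) < i) <->
  (forall i, 1 <= i <= l ->
     i < tilde m (tau l (l + m - 1) mu) i ->
     i < tilde m (tau l (l + m - 1) mu) (tilde m (tau l (l + m - 1) mu) i)).
Proof.
move=> hl hm [hr _].
have R : forall j, 1 <= j <= l -> 1 <= tilde m mu j <= l.
  by move=> j hj; apply: tfun_range => //; apply: hr.
have D : forall i, 1 <= i <= l ->
    tilde m (tau l (l + m - 1) mu) i = l.+1 - tilde m mu (l.+1 - i).
  move=> i hi; rewrite /tilde /tau; apply: tfun_dual => //; apply: hr; lia.
split.
- move=> H i hi; rewrite D // => hlt.
  have hj : 1 <= l.+1 - i <= l by lia.
  have := R _ hj => hR.
  have h1 : tilde m mu (l.+1 - i) < l.+1 - i by lia.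
  have := H _ hj h1 => h2.
  rewrite D; last by lia.
  have -> : l.+1 - (l.+1 - tilde m mu (l.+1 - i)) = tilde m mu (l.+1 - i) by lia.
  have := R _ (R _ hj); lia.
- move=> H j hj hlt.
  have hi : 1 <= l.+1 - j <= l by lia.
  have hR := R _ hj.
  have e : l.+1 - (l.+1 - j) = j by lia.
  have h1 : l.+1 - j < tilde m (tau l (l + m - 1) mu) (l.+1 - j) by rewrite D // e; lia.
  have := H _ hi h1.
  rewrite (D _ hi) e D; last by lia.
  have -> : l.+1 - (l.+1 - tilde m mu j) = tilde m mu j by lia.
  have := R _ (R _ hj); lia.
Qed.
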